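(* Let $(S,\delta)$ be a dihedral set, $S'\subset S$ a subset with $|S'|\ge3$, $\delta'$ the induced dihedral structure on $S'$, and $f:\mathcal M_{0,S}\to\mathcal M_{0,S'}$ the forgetful map. Then: (1) for every chord $c'$ of $(S',\delta')$, $f^*(\omega_{c'})=\sum_{c\leadsto c'}\omega_c$ in $H^1(\mathcal M_{0,S})$, the sum over chords $c$ of $(S,\delta)$ with $c\leadsto c'$; (2) $f^*:H^\bullet(\mathcal M_{0,S'})\to H^\bullet(\mathcal M_{0,S})$ is compatible with the residual filtrations: it maps the span of monomials in the $\omega_{c'}$ with at most $r$ residual chords into the span of monomials in the $\omega_c$ with at most $r$ residual chords, for every $r$.
   Context: Dihedral set: finite $S$, $|S|=n\ge3$, identified with the sides of an unoriented $n$-gon up to dihedral symmetry; chords are pairs of non-consecutive vertices. The polygon $(S',\delta')$ is obtained from $(S,\delta)$ by contracting the sides not in $S'$; this maps vertices of $(S,\delta)$ onto vertices of $(S',\delta')$, and for a chord $c$ of $(S,\delta)$ and a chord $c'$ of $(S',\delta')$ one writes $c\leadsto c'$ if the endpoints of $c$ are sent to the endpoints of $c'$. $\mathcal M_{0,S}$ is the moduli space of $S$-indexed distinct points on $\mathbb P^1(\mathbb C)$ modulo $\mathrm{PGL}_2(\mathbb C)$; $f$ forgets the points indexed by $S\setminus S'$. For a chord $c$, $\omega_c=\frac1{2\pi i}d\log u_c$ where $u_c$ is Brown's dihedral coordinate (sides labelled $1..n$ in dihedral order, $c$ joining the vertex between sides $i,i+1$ to that between $j,j+1$: $u_c=\frac{(z_i-z_{j+1})(z_{i+1}-z_j)}{(z_i-z_j)(z_{i+1}-z_{j+1})}$);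 the classes $\omega_c$ generate the rational cohomology algebra of $\mathcal M_{0,S}$. A chord $c_i$ is residual in a set $\{c_1,\dots,c_k\}$ if no other $c_j$ crosses it (intersects it in the interior of the polygon). *)

(* Defs.v *)
From HB Require Import structures.
From mathcomp Require Import all_boot all_order all_algebra.
From mathcomp Require Import complex Rstruct.
Set Implicit Arguments. Unset Strict Implicit. Unset Printing Implicit Defensive.
Import Order.TTheory GRing.Theory Num.Theory.
Local Open Scope ring_scope.

Definition CC : numClosedFieldType := (Rdefinitions.R)[i].

(* Dihedral structure.  The dihedral set S is 'I_n with its standard cyclic *)
(* order 0,1,...,n-1.  A sub-polygon is given by a set P of sides (P = setT *)
(* for (S,delta), P = S' for (S',delta')) with the induced dihedral order.  *)
(* Vertices of the polygon P are labelled by elements s of P: vertex s is   *)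
(* the vertex between side s and the next side of P (cyclically).           *)

Definition nextP n (P : {set 'I_n}) (s : 'I_n) : 'I_n :=
  head s [seq t <- [seq iter k.+1 (@ordS n) s | k <- iota 0 n] | t \in P].

(* the last side of P at or before k, cyclically: the vertex of the big
   polygon between sides k and k+1 is sent, by contracting the sides not in
   P, to the vertex of P labelled prevP P k. *)
Definition prevP n (P : {set 'I_n}) (k : 'I_n) : 'I_n :=
  head k [seq t <- [seq iter m (@ord_pred n) k | m <- iota 0 n] | t \in P].

(* A chord of P: a pair (a,b), a < b (to count unordered pairs once), of
   distinct non-consecutive vertices of P. *)
Definition isChord n (P : {set 'I_n}) (c : 'I_n * 'I_n) : bool :=
  [&& c.1 \in P, c.2 \in P, (c.1 < c.2)%N, c.2 != nextP P c.1
      & c.1 != nextP P c.2].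

Definition leadsto n (P : {set 'I_n}) (c c' : 'I_n * 'I_n) : bool :=
  [set prevP P c.1; prevP P c.2] == [set c'.1; c'.2].

(* Two chords cross in the interior of the polygon (vertex labels are
   increasing along the boundary). *)
Definition crosses n (c d : 'I_n * 'I_n) : bool :=
  let btw x := ((c.1 < x) && (x < c.2))%N in
  [&& c.1 != d.1, c.1 != d.2, c.2 != d.1, c.2 != d.2 & btw d.1 (+) btw d.2].

Definition nresidual n (cs : seq ('I_n * 'I_n)) : nat :=
  count (fun c => ~~ has (crosses c) (undup cs)) (undup cs).

(* Holomorphic differential forms on the configuration space of n distinct  *)
(* points z_0,...,z_{n-1} of C, written in the basis dz_I (I increasing).   *)
(* The value at a point of a form is an element of the exterior algebra     *)
(* Lambda(C^n), encoded as a finite function {set 'I_n} -> C.               *)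

Definition ext n := {ffun {set 'I_n} -> CC}.

(* number of pairs (j,k) with j in J, k in K, k < j: the sign of
   dz_J /\ dz_K = (-1)^inv dz_(J u K). *)
Definition ninv n (J K : {set 'I_n}) : nat :=
  #|[set p : 'I_n * 'I_n | (p.1 \in J) && (p.2 \in K) && (p.2 < p.1)%N]|.

Definition wedge n (a b : ext n) : ext n :=
  [ffun I : {set 'I_n} => \sum_(J : {set 'I_n} | J \subset I)
               (-1) ^+ ninv J (I :\: J) * a J * b (I :\: J)].

Definition ext1 n : ext n := [ffun I : {set 'I_n} => (I == set0)%:R].

(* a differential form on Conf_n(C): a function from points to Lambda(C^n);
   only its values at configurations of distinct points matter. *)
Definition dform n := ('I_n -> CC) -> ext n.

Definition form_wedge n (a b : dform n) : dform n := fun z => wedge (a z) (b z).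
Definition form1 n : dform n := fun _ => ext1 n.

(* d log (z_a - z_b) = (dz_a - dz_b) / (z_a - z_b) *)
Definition dlogdiff n (a b : 'I_n) : dform n := fun z =>
  [ffun I : {set 'I_n} => if I == [set a] then (z a - z b)^-1
             else if I == [set b] then - (z a - z b)^-1 else 0].

(* Brown's dihedral coordinate of the chord c = (i,j) of the polygon P:
   u_c = (z_i - z_{j+1})(z_{i+1} - z_j) / ((z_i - z_j)(z_{i+1} - z_{j+1})),
   where i+1 denotes the next side of P.  omega P c = d log u_c
   (the normalising constant 1/(2 pi i) is dropped). *)
Definition omega n (P : {set 'I_n}) (c : 'I_n * 'I_n) : dform n := fun z =>
  let i := c.1 in let j := c.2 in
  let i1 := nextP P i in let j1 := nextP P j in
  [ffun I : {set 'I_n} => dlogdiff i j1 z I + dlogdiff i1 j z I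
             - dlogdiff i j z I - dlogdiff i1 j1 z I].

Definition monomial n (P : {set 'I_n}) (cs : seq ('I_n * 'I_n)) : dform n :=
  foldr (fun c m => form_wedge (omega P c) m) (@form1 n) cs.

Definition resmonom n (P : {set 'I_n}) (r : nat) (m : dform n) : Prop :=
  exists cs : seq ('I_n * 'I_n),
    [/\ all (isChord P) cs, (nresidual cs <= r)%N & m = monomial P cs].

Definition in_Qspan n (M : dform n -> Prop) (x : dform n) : Prop :=
  exists l : seq (rat * dform n),
    (forall p, List.In p l -> M p.2) /\
    forall z : 'I_n -> CC, injective z ->
      x z = [ffun I : {set 'I_n} => \sum_(p <- l) ratr p.1 * p.2 z I].

(* Main.v *)
Require Import Defs.
From HB Require Import structures.
From mathcomp Require Import all_boot all_order all_algebra.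
From mathcomp Require Import complex Rstruct.
From mathcomp Require Import zify ring.
Set Implicit Arguments. Unset Strict Implicit. Unset Printing Implicit Defensive.
Import Order.TTheory GRing.Theory Num.Theory.

Lemma head_filter_nth (T : Type) (d : T) (p : pred T) (s : seq T) :
  head d (filter p s) = nth d s (find p s).
Proof. by elim: s => //= x s IH; case: (p x). Qed.

Lemma min_uniq (T : Type) (f : nat -> T) (p : pred T) a b :
  p (f a) -> p (f b) -> (forall j, j < a -> ~~ p (f j)) ->
  (forall j, j < b -> ~~ p (f j)) -> a = b.
Proof.
move=> pa pb ma mb; case: (ltngtP a b) => // h.
- by move: (mb _ h); rewrite pa.
- by move: (ma _ h); rewrite pb.
Qed.

Lemma head_first (T : Type) (d : T) (f : nat -> T) (p : pred T) n :
  (exists2 m, m < n & p (f m)) ->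
  exists m, [/\ m < n, p (f m), (forall j, j < m -> ~~ p (f j)) &
     head d (filter p (map f (iota 0 n))) = f m].
Proof.
move=> ex.
have exm : exists m, (m < n) && p (f m).
  by case: ex => m h1 h2; exists m; rewrite h1 h2.
case: (ex_minnP exm) => m /andP[mn pm] minm.
have bef : forall j, j < m -> ~~ p (f j).
  move=> j jm; apply/negP => pj.
  have := minm j; rewrite pj (ltn_trans jm mn) => /(_ isT).
  by rewrite leqNgt jm.
exists m; split => //.
rewrite head_filter_nth.
set s := map f (iota 0 n).
have hs : has p s.
  by rewrite /s has_map; apply/hasP; exists m => //; rewrite mem_iota.
have fs : find p s < n.
  by have := hs; rewrite has_find /s size_map size_iota.
have nthf : forall j, j < n -> nth d s j = f j.
  by move=> j jn; rewrite (nth_map 0) ?size_iota // nth_iota.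
have e : find p s = m.
  apply: (@min_uniq _ f p).
  - by rewrite -nthf // nth_find.
  - exact: pm.
  - move=> j jf; rewrite -nthf; last exact: ltn_trans jf fs.
    by rewrite before_find.
  - exact: bef.
by rewrite e nthf.
Qed.

Lemma iterS_val n (s : 'I_n) k : val (iter k (@ordS n) s) = (s + k) %% n.
Proof.
elim: k => [|k IH] /=; first by rewrite addn0 modn_small.
by rewrite IH -addn1 modnDml addn1 addnS.
Qed.

Lemma iterS_n n (s : 'I_n) : iter n (@ordS n) s = s.
Proof. by apply: val_inj; rewrite iterS_val modnDr modn_small. Qed.

Lemma mod_lt2 x n : x < n + n -> x %% n = if x < n then x else x - n.
Proof.
move=> h; case: ltnP => h2; first by rewrite modn_small.
rewrite -{1}(subnK h2) modnDr modn_small //; lia.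
Qed.

Lemma iterS_neq n (s : 'I_n) k : 0 < k < n -> iter k (@ordS n) s != s.
Proof.
move=> /andP[k0 kn]; apply/eqP => /(congr1 val); rewrite iterS_val.
have sn := ltn_ord s.
rewrite mod_lt2; last lia.
have -> : val s = nat_of_ord s by [].
by case: ltnP => h; move/eqP; lia.
Qed.

Lemma iterS_cover n (s t : 'I_n) : exists2 k, k < n & iter k (@ordS n) s = t.
Proof.
have n0 : 0 < n by case: n s t => [[]|].
exists ((t + n - s) %% n); first by rewrite ltn_mod.
apply: val_inj; rewrite iterS_val /= modnDmr.
have sn := ltn_ord s; have tn := ltn_ord t.
have -> : s + (t + n - s) = t + n by lia.
by rewrite modnDr modn_small.
Qed.

Lemma iterSP n (s : 'I_n) j k : j <= k ->
  iter j (@ordS n) (iter k (@ord_pred n) s) = iter (k - j) (@ord_pred n) s.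
Proof.
elim: j => [|j IH] jk; first by rewrite subn0.
rewrite iterS IH ?(ltnW jk) //.
have -> : k - j = (k - j.+1).+1 by lia.
by rewrite iterS ord_predK.
Qed.

Lemma iterPS n (s : 'I_n) j k : j <= k ->
  iter j (@ord_pred n) (iter k (@ordS n) s) = iter (k - j) (@ordS n) s.
Proof.
elim: j => [|j IH] jk; first by rewrite subn0.
rewrite iterS IH ?(ltnW jk) //.
have -> : k - j = (k - j.+1).+1 by lia.
by rewrite iterS ordSK.
Qed.

Lemma iterP_cover n (s t : 'I_n) : exists2 k, k < n & iter k (@ord_pred n) s = t.
Proof.
case: (iterS_cover t s) => k kn e; exists k => //.
by rewrite -e iterPS // subnn.
Qed.

Lemma prevP_spec n (P : {set 'I_n}) (k : 'I_n) : (exists t, t \in P) ->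
  exists m, [/\ m < n, iter m (@ord_pred n) k \in P,
    (forall j, j < m -> iter j (@ord_pred n) k \notin P) &
    prevP P k = iter m (@ord_pred n) k].
Proof.
move=> [t tP]; rewrite /prevP.
case: (@head_first _ k (fun m => iter m (@ord_pred n) k) (fun t => t \in P) n).
  by case: (iterP_cover k t) => m mn e; exists m => //; rewrite e.
by move=> m [h1 h2 h3 h4]; exists m; split.
Qed.

Lemma nextP_spec n (P : {set 'I_n}) (s : 'I_n) : (exists t, t \in P) ->
  exists m, [/\ m < n, iter m.+1 (@ordS n) s \in P,
    (forall j, j < m -> iter j.+1 (@ordS n) s \notin P) &
    nextP P s = iter m.+1 (@ordS n) s].
Proof.
move=> [t tP]; rewrite /nextP.
case: (@head_first _ s (fun m => iter m.+1 (@ordS n) s) (fun t => t \in P) n); last first.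
  by move=> m [h1 h2 h3 h4]; exists m; split.
case: (iterS_cover s t) => m mn e.
case: m mn e => [|m] mn e.
- have n0 : 0 < n := leq_ltn_trans (leq0n _) (ltn_ord s).
  exists n.-1; first by rewrite prednK.
  by rewrite prednK // iterS_n; move: e => /= ->.
- by exists m => //; [exact: ltnW | rewrite e].
Qed.

Lemma prevP_in n (P : {set 'I_n}) k : (exists t, t \in P) -> prevP P k \in P.
Proof. by move=> ex; case: (prevP_spec k ex) => m [_ h _ ->]. Qed.

Lemma nextP_in n (P : {set 'I_n}) k : (exists t, t \in P) -> nextP P k \in P.
Proof. by move=> ex; case: (nextP_spec k ex) => m [_ h _ ->]. Qed.

Lemma prevP_id n (P : {set 'I_n}) t : t \in P -> prevP P t = t.
Proof.
move=> tP; case: (prevP_spec t (ex_intro _ t tP)) => m [_ _ h ->].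
by case: m h => // m h; move: (h 0 isT); rewrite /= tP.
Qed.

Lemma prevP_pred n (P : {set 'I_n}) t : (exists u, u \in P) -> t \notin P ->
  prevP P t = prevP P (ord_pred t).
Proof.
move=> ex tP.
case: (prevP_spec t ex) => m [mn pm bm ->].
case: (prevP_spec (ord_pred t) ex) => m' [mn' pm' bm' ->].
rewrite -iterSr.
congr iter.
apply: (@min_uniq _ (fun j => iter j (@ord_pred n) t) (fun t => t \in P)) => //.
- by rewrite iterSr.
- by move=> [|j] // jm; rewrite iterSr; apply: bm'.
Qed.

Lemma next_prev_pred n (P : {set 'I_n}) t : t \in P ->
  nextP P (prevP P (ord_pred t)) = t.
Proof.
move=> tP; have ex : exists u, u \in P by exists t.
case: (prevP_spec (ord_pred t) ex) => m [mn pm bm ->].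
case: (nextP_spec (iter m (@ord_pred n) (ord_pred t)) ex) => m' [mn' pm' bm' ->].
rewrite -iterSr in pm' bm' *.
have e : m' = m.
  apply: (@min_uniq _ (fun j => iter j.+1 (@ordS n) (iter m.+1 (@ord_pred n) t))
             (fun t => t \in P)) => //.
  - by rewrite iterSP // subnn.
  - move=> j jm; rewrite iterSP; last lia.
    have -> : m.+1 - j.+1 = (m - j.+1).+1 by lia.
    by rewrite iterSr; apply: bm; lia.
by rewrite e iterSP // subnn.
Qed.

Lemma prev_pred_next n (P : {set 'I_n}) s : s \in P ->
  prevP P (ord_pred (nextP P s)) = s.
Proof.
move=> sP; have ex : exists u, u \in P by exists s.
case: (nextP_spec s ex) => m [mn pm bm ->].
rewrite iterS ordSK.
case: (prevP_spec (iter m (@ordS n) s) ex) => m' [mn' pm' bm' ->].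
have e : m' = m.
  apply: (@min_uniq _ (fun j => iter j (@ord_pred n) (iter m (@ordS n) s))
             (fun t => t \in P)) => //.
  - by rewrite iterPS // subnn.
  - move=> j jm; rewrite iterPS; last lia.
    have -> : m - j = (m - j.+1).+1 by lia.
    by apply: bm; lia.
by rewrite e iterPS // subnn.
Qed.

Lemma nextP_neq n (P : {set 'I_n}) s t : t \in P -> t != s -> nextP P s != s.
Proof.
move=> tP ts; have ex : exists u, u \in P by exists t.
case: (nextP_spec s ex) => m [mn pm bm ->].
case: (iterS_cover s t) => k kn e.
case: k kn e => [|k] kn e; first by move: ts; rewrite -e eqxx.
have mk : m <= k.
  rewrite leqNgt; apply/negP => km; move: (bm _ km); by rewrite e tP.
by apply: iterS_neq; lia.
Qed.

Lemma nextP_setT n (s : 'I_n) : nextP [set: 'I_n] s = ordS s.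
Proof.
have ex : exists u, u \in [set: 'I_n] by exists s; rewrite inE.
case: (nextP_spec s ex) => m [mn pm bm ->].
by case: m bm {mn pm} => // m bm; move: (bm 0 isT); rewrite inE.
Qed.

Lemma prevP_setT n (s : 'I_n) : prevP [set: 'I_n] s = s.
Proof. by rewrite prevP_id ?inE. Qed.

Lemma ord_pred_val n (w : 'I_n) : nat_of_ord (ord_pred w) = if w == 0 :> nat then n.-1 else w.-1.
Proof.
rewrite /=; have wn := ltn_ord w.
case: eqP => [->|h].
  by rewrite add0n modn_small //; lia.
have -> : (w + n).-1 = w.-1 + n by lia.
by rewrite modnDr modn_small //; lia.
Qed.

Definition rho n (P : {set 'I_n}) (w : ordinal n) : bool := [forall t : ordinal n, (t \in P) ==> (nat_of_ord w < nat_of_ord t)%N].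

Lemma rhoP n (P : {set 'I_n}) (w : 'I_n) : reflect (forall t, t \in P -> (w < t)%N) (rho P w).
Proof.
apply: (iffP forallP) => h t; first by move=> tP; move: (h t); rewrite tP.
by apply/implyP; apply: h.
Qed.

Lemma prev_le n (P : {set 'I_n}) (w : 'I_n) t : t \in P -> (t <= w)%N ->
  (prevP P w <= w)%N /\ (forall u, u \in P -> (u <= w)%N -> (u <= prevP P w)%N).
Proof.
move: {2}(nat_of_ord w) (erefl (nat_of_ord w)) => m; elim: m w t => [|m IH] w t e tP tw.
- have w0 : w = t by apply: val_inj; move: tw; rewrite /=; lia.
  subst w; rewrite prevP_id //; split => // u _; by rewrite -e.
- case wP : (w \in P).
    by rewrite prevP_id //; split.
  have ex : exists u, u \in P by exists t.
  rewrite (prevP_pred ex (negbT wP)).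
  have ep : nat_of_ord (ord_pred w) = m by rewrite ord_pred_val e.
  have tw' : (t <= ord_pred w)%N.
    rewrite ep; have : t != w by apply/eqP => h; subst t; rewrite tP in wP.
    move/eqP => h; have : nat_of_ord t <> nat_of_ord w by move=> h'; apply: h; apply: val_inj.
    lia.
  have [h1 h2] := IH (ord_pred w) t ep tP tw'.
  split; first by move: h1; rewrite ep; lia.
  move=> u uP uw; apply: h2 => //.
  have : nat_of_ord u <> nat_of_ord w.
    move=> h'; have h'' : u = w by apply: val_inj.
    by subst u; rewrite uP in wP.
  rewrite ep; lia.
Qed.

Lemma prev_wrap n (P : {set 'I_n}) (w : 'I_n) : (exists t, t \in P) -> rho P w ->
  forall u, u \in P -> (u <= prevP P w)%N.
Proof.
move=> ex; move: {2}(nat_of_ord w) (erefl (nat_of_ord w)) => m.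
elim: m w => [|m IH] w e /rhoP rw.
- have wP : w \notin P by apply/negP => h; move: (rw w h); rewrite ltnn.
  rewrite (prevP_pred ex wP).
  case: ex => t tP.
  have tn : (t <= ord_pred w)%N.
    rewrite ord_pred_val e /=; have := ltn_ord t; lia.
  have [_ h] := prev_le tP tn.
  move=> u uP; apply: h => //; rewrite ord_pred_val e /=; have := ltn_ord u; lia.
- have wP : w \notin P by apply/negP => h; move: (rw w h); rewrite ltnn.
  rewrite (prevP_pred ex wP).
  apply: IH; first by rewrite ord_pred_val e.
  apply/rhoP => t tP; rewrite ord_pred_val e /=; have := rw t tP; lia.
Qed.

Lemma not_rho n (P : {set 'I_n}) (w : 'I_n) : ~~ rho P w -> exists2 t, t \in P & (t <= w)%N.
Proof.
move/rhoP => h.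
case: (boolP [exists t, (t \in P) && (t <= w)%N]).
  by case/existsP => t /andP[]; exists t.
rewrite negb_exists => /forallP h2; exfalso; apply: h => t tP.
by move: (h2 t); rewrite tP /= -ltnNge.
Qed.

Lemma ord_prev n (P : {set 'I_n}) (w w' : 'I_n) : (exists t, t \in P) ->
  prevP P w != prevP P w' ->
  (prevP P w < prevP P w')%N = (w < w')%N (+) rho P w (+) rho P w'.
Proof.
move=> ex ne.
have iw := prevP_in w ex; have iw' := prevP_in w' ex.
have nev : nat_of_ord (prevP P w) <> nat_of_ord (prevP P w').
  by move=> h; move: ne; rewrite (val_inj h) eqxx.
case rw: (rho P w); case rw': (rho P w').
- have h1 := prev_wrap ex rw iw'; have h2 := prev_wrap ex rw' iw. lia.
- have h1 := prev_wrap ex rw iw'.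
  case: (not_rho (negbT rw')) => t tP tw'.
  move/rhoP: rw => rw; have := rw t tP => wt.
  have -> : (w < w')%N = true by apply/idP; lia.
  rewrite /=; apply/negbTE; rewrite -leqNgt; exact: h1.
- have h1 := prev_wrap ex rw' iw.
  case: (not_rho (negbT rw)) => t tP tw.
  move/rhoP: rw' => rw'; have := rw' t tP => wt.
  have -> : (w < w')%N = false by apply/negbTE; rewrite -leqNgt; lia.
  rewrite /=; apply/idP; lia.
- case: (not_rho (negbT rw)) => t tP tw.
  case: (not_rho (negbT rw')) => t' tP' tw'.
  have [a1 a2] := prev_le tP tw; have [b1 b2] := prev_le tP' tw'.
  rewrite !addbF; case: (ltnP w w') => h.
  + have := a2 _ iw'; have := b2 _ iw. lia.
  + have := b2 _ iw; have := a2 _ iw'. lia.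
Qed.

Lemma set2_eq (T : finType) (x1 x2 y1 y2 : T) :
  [set x1; x2] = [set y1; y2] -> y1 != y2 ->
  (x1 = y1 /\ x2 = y2) \/ (x1 = y2 /\ x2 = y1).
Proof.
move=> E ne.
have h1 : x1 \in [set y1; y2] by rewrite -E set21.
have h2 : x2 \in [set y1; y2] by rewrite -E set22.
have h3 : y1 \in [set x1; x2] by rewrite E set21.
have h4 : y2 \in [set x1; x2] by rewrite E set22.
move: h1 h2 h3 h4; rewrite !in_set2.
case/orP => /eqP e1; case/orP => /eqP e2; rewrite e1 e2 ?eqxx /= => h3 h4.
- by move: ne h4; rewrite eq_sym orbb => /negbTE ->.
- by left.
- by right.
- by move: ne h3; rewrite orbb => /negbTE ->.
Qed.

Lemma rho_mono n (P : {set 'I_n}) (k l : 'I_n) : (k < l)%N -> rho P l -> rho P k.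
Proof.
move=> kl /rhoP h; apply/rhoP => t tP; have := h t tP; lia.
Qed.

Lemma in_lift n (P : {set 'I_n}) (k l w : 'I_n) : (exists t, t \in P) -> (k < l)%N ->
  prevP P k != prevP P l -> prevP P w != prevP P k -> prevP P w != prevP P l ->
  ((k < w) && (w < l))%N =
  ((((prevP P k < prevP P w) && (prevP P w < prevP P l)) ||
    ((prevP P l < prevP P w) && (prevP P w < prevP P k)))%N (+) (prevP P l < prevP P k)%N).
Proof.
move=> ex kl nkl nwk nwl.
have nkw : prevP P k != prevP P w by rewrite eq_sym.
have nlw : prevP P l != prevP P w by rewrite eq_sym.
have nlk : prevP P l != prevP P k by rewrite eq_sym.
have okw := ord_prev ex nkw; have owk := ord_prev ex nwk.
have olw := ord_prev ex nlw; have owl := ord_prev ex nwl.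
have okl := ord_prev ex nkl; have olk := ord_prev ex nlk.
have ik := prevP_in k ex; have il := prevP_in l ex; have iw := prevP_in w ex.
have rk1 : rho P k -> (prevP P l <= prevP P k)%N && (prevP P w <= prevP P k)%N.
  by move=> r; rewrite (prev_wrap ex r il) (prev_wrap ex r iw).
have rl1 : rho P l -> (prevP P k <= prevP P l)%N && (prevP P w <= prevP P l)%N.
  by move=> r; rewrite (prev_wrap ex r ik) (prev_wrap ex r iw).
have rw1 : rho P w -> (prevP P k <= prevP P w)%N && (prevP P l <= prevP P w)%N.
  by move=> r; rewrite (prev_wrap ex r ik) (prev_wrap ex r il).
have rlk : rho P l -> rho P k := rho_mono kl.
have ekl : (nat_of_ord (prevP P k) != prevP P l) by [].
have ewk : (nat_of_ord (prevP P w) != prevP P k) by [].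
have ewl : (nat_of_ord (prevP P w) != prevP P l) by [].
move: rk1 rl1 rw1 rlk okw owk olw owl okl olk ekl ewk ewl.
case: (rho P k); case: (rho P l); case: (rho P w); rewrite /= ?addbT ?addbF.
all: rewrite ?negbK.
all: move: kl; set A := nat_of_ord (prevP P k); set B := nat_of_ord (prevP P l);
  set W := nat_of_ord (prevP P w).
all: move: (nat_of_ord k) (nat_of_ord l) (nat_of_ord w) A B W => k' l' w' A' B' W'.
all: case: (ltngtP k' w'); case: (ltngtP w' l'); case: (ltngtP l' k');
case: (ltngtP A' W'); case: (ltngtP W' B'); case: (ltngtP B' A') => //=;
intros; lia.
Qed.


Lemma btw_lift n (P : {set 'I_n}) (k l w : 'I_n) (a b : 'I_n) :
  (exists t, t \in P) -> (k < l)%N -> (a < b)%N ->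
  [set prevP P k; prevP P l] = [set a; b] ->
  prevP P w != a -> prevP P w != b ->
  ((k < w) && (w < l))%N = ((a < prevP P w) && (prevP P w < b))%N (+) (prevP P l < prevP P k)%N.
Proof.
move=> ex kl ab E wa wb.
have ab' : a != b by rewrite neq_ltn ab.
have hba : forall t : 'I_n, ((b < t) && (t < a))%N = false.
  by move=> t; apply/negbTE/negP => /andP[h1 h2]; lia.
have [[ka lb]|[kb la]] := set2_eq E ab'.
- rewrite (in_lift ex kl) //; last by rewrite lb.
  + by rewrite ka lb hba orbF.
  + by rewrite ka lb.
  + by rewrite ka.
- rewrite (in_lift ex kl) //; last by rewrite la.
  + by rewrite kb la hba orFb.
  + by rewrite kb la eq_sym.
  + by rewrite kb.
Qed.

Lemma cross_lift n (P : {set 'I_n}) (c d c' d' : 'I_n * 'I_n) :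
  (exists t, t \in P) -> (c.1 < c.2)%N -> (c'.1 < c'.2)%N -> (d'.1 < d'.2)%N ->
  leadsto P c c' -> leadsto P d d' -> crosses c' d' -> crosses c d.
Proof.
move=> ex; case: c => k l; case: d => u v; case: c' => a b; case: d' => x y /=.
move=> kl ab xy /eqP Lc /eqP Ld.
rewrite /crosses /= => /and5P[ax ay bx by_ bt].
rewrite /= in Lc Ld.
have xy' : x != y by rewrite neq_ltn xy.
have ab' : a != b by rewrite neq_ltn ab.
have Lc1 : prevP P k \in [set a; b] by rewrite -Lc set21.
have Lc2 : prevP P l \in [set a; b] by rewrite -Lc set22.
have Ld1 : prevP P u \in [set x; y] by rewrite -Ld set21.
have Ld2 : prevP P v \in [set x; y] by rewrite -Ld set22.
have dis : forall s t : 'I_n, prevP P s \in [set a; b] -> prevP P t \in [set x; y] ->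
    (s != t) && (prevP P t != a) && (prevP P t != b).
  move=> s t; rewrite !in_set2 => hs ht.
  have nt : (prevP P t != a) && (prevP P t != b).
    by case/orP: ht => /eqP ->; [rewrite eq_sym ax eq_sym bx | rewrite eq_sym ay eq_sym by_].
  rewrite -andbA nt andbT; apply/eqP => e; subst t; move: nt.
  by case/orP: hs => /eqP ->; rewrite eqxx // andbF.
have /andP[/andP[-> ua] ub] := dis _ _ Lc1 Ld1.
have /andP[/andP[-> va] vb] := dis _ _ Lc1 Ld2.
have /andP[/andP[-> _] _] := dis _ _ Lc2 Ld1.
have /andP[/andP[-> _] _] := dis _ _ Lc2 Ld2.
rewrite (btw_lift ex kl ab Lc ua ub) (btw_lift ex kl ab Lc va vb) /=.
by have [[ux vy]|[uy vx]] := set2_eq Ld xy'; rewrite ?ux ?vy ?uy ?vx;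
  case: (prevP P l < prevP P k)%N; rewrite ?addbT ?addbF ?addNb ?addbN ?negbK // addbC.
Qed.

Local Open Scope ring_scope.

Lemma zmod4 (V : zmodType) (a b c d : V) : a + b - c - d = (a - c) - (d - b).
Proof. by rewrite opprB addrA -[a + b - c]addrA [b - c]addrC addrA. Qed.

Lemma omegaE n (P : {set 'I_n}) (c : 'I_n * 'I_n) z :
  omega P c z = dlogdiff c.1 (nextP P c.2) z + dlogdiff (nextP P c.1) c.2 z
               - dlogdiff c.1 c.2 z - dlogdiff (nextP P c.1) (nextP P c.2) z.
Proof. by apply/ffunP => I; rewrite !ffunE. Qed.

Lemma dsym n (x y : 'I_n) z : dlogdiff x y z = dlogdiff y x z.
Proof.
apply/ffunP => I; rewrite !ffunE.
have e : (z y - z x)^-1 = - (z x - z y)^-1 by rewrite -invrN opprB.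
case: (eqVneq I [set x]) => hx; case: (eqVneq I [set y]) => hy //.
- have xy : x = y by apply/set1P; rewrite -hy hx set11.
  by subst y.
- by rewrite e opprK.
Qed.

Lemma telescope n (P : {set 'I_n}) (V : zmodType) (g : 'I_n -> V) b t :
  b \in P -> t \in P -> t != b ->
  \sum_(l | prevP P l == b) (g (ordS l) - g l) = g (nextP P b) - g b.
Proof.
move=> bP tP tb.
have ex : exists u, u \in P by exists b.
rewrite sumrB.
rewrite (reindex (@ord_pred n)) /=; last by apply: onW_bij; exact: ord_pred_bij.
under eq_bigr do rewrite ord_predK.
set nb := nextP P b.
have nbP : nb \in P := nextP_in b ex.
have nbb : nb != b := nextP_neq tP tb.
have Q : forall j, (prevP P (ord_pred j) == b) =
                   ((prevP P j == b) && (j != b)) || (j == nb).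
  move=> j; case jP : (j \in P).
  - rewrite (prevP_id jP) andbN /=.
    apply/eqP/eqP => [e|->]; first by rewrite /nb -e next_prev_pred.
    exact: prev_pred_next.
  - have jb : j != b by apply/eqP => e; rewrite e bP in jP.
    have jn : j != nb by apply/eqP => e; rewrite e nbP in jP.
    by rewrite -(prevP_pred ex (negbT jP)) jb (negbTE jn) andbT orbF.
rewrite (eq_bigl _ _ Q).
rewrite (bigD1 nb) /=; last by rewrite eqxx orbT.
rewrite [X in _ - X](bigD1 b) /=; last by rewrite prevP_id ?eqxx.
rewrite (eq_bigl (fun j => (prevP P j == b) && (j != b))); last first.
  move=> j; case: (eqVneq j nb) => [->|jn].
    by rewrite prevP_id // (negbTE nbb) andbF.
  by rewrite orbF andbT.
by rewrite opprD addrACA subrr addr0.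
Qed.

Lemma adj n (P : {set 'I_n}) (x y : 'I_n) : (exists t, t \in P) ->
  prevP P y != prevP P x -> prevP P y != nextP P (prevP P x) -> y != ordS x.
Proof.
move=> ex h1 h2; apply/eqP => e; subst y.
case yP : (ordS x \in P).
- have := next_prev_pred yP; rewrite ordSK => e.
  by move: h2; rewrite (prevP_id yP) e eqxx.
- by move: h1; rewrite (prevP_pred ex (negbT yP)) ordSK eqxx.
Qed.

Lemma leadstoE n (P : {set 'I_n}) (c : 'I_n * 'I_n) (a b : 'I_n) : a != b ->
  leadsto P c (a, b) =
  ((prevP P c.1 == a) && (prevP P c.2 == b)) || ((prevP P c.1 == b) && (prevP P c.2 == a)).
Proof.
move=> ab; rewrite /leadsto /=; apply/eqP/idP.
- by case/(set2_eq)/(_ ab) => -[-> ->]; rewrite !eqxx ?orbT.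
- by case/orP => /andP[/eqP -> /eqP ->] //; rewrite setUC.
Qed.

Lemma chord_char n (P : {set 'I_n}) (x y a b : 'I_n) : (exists t, t \in P) ->
  prevP P x = a -> prevP P y = b -> a != b -> b != nextP P a -> a != nextP P b ->
  isChord [set: 'I_n] (x, y) = (x < y)%N.
Proof.
move=> ex hx hy ab h1 h2.
rewrite /isChord /= !nextP_setT !in_setT /=.
have e1 : y != ordS x.
  apply: (adj ex); first by rewrite hx hy eq_sym.
  by rewrite hx hy.
have e2 : x != ordS y.
  apply: (adj ex); first by rewrite hx hy.
  by rewrite hx hy.
by rewrite e1 e2 !andbT.
Qed.

Lemma Fsym n (x y : 'I_n) z : omega [set: 'I_n] (y, x) z = omega [set: 'I_n] (x, y) z.
Proof.
rewrite !omegaE /= !nextP_setT.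
rewrite (dsym y (ordS x)) (dsym (ordS y) x) (dsym y x) (dsym (ordS y) (ordS x)).
by rewrite [dlogdiff (ordS x) y z + _]addrC.
Qed.

Lemma part1 n (S' : {set 'I_n}) (c' : 'I_n * 'I_n) z : isChord S' c' ->
  omega S' c' z =
  \sum_(c : 'I_n * 'I_n | isChord setT c && leadsto S' c c') omega setT c z.
Proof.
case: c' => a b; rewrite /isChord /= => /and5P[aP bP ab nba nab].
have ex : exists t, t \in S' by exists a.
have ab' : a != b by rewrite neq_ltn ab.
set F := fun c => omega [set: 'I_n] c z.
rewrite (bigID (fun c : 'I_n * 'I_n => prevP S' c.1 == a)) /=.
rewrite (eq_bigl (fun c : 'I_n * 'I_n =>
     ((prevP S' c.1 == a) && (prevP S' c.2 == b)) && (c.1 < c.2)%N)); last first.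
  case=> x y /=; rewrite leadstoE //=.
  case: (eqVneq (prevP S' x) a) => hx; last by rewrite !andbF.
  rewrite hx (negbTE ab') /= orbF andbT.
  case: (eqVneq (prevP S' y) b) => hy; last by rewrite !andbF.
  have := chord_char ex hx hy ab' nba nab; rewrite /isChord /= => ->.
  by rewrite andbT.
rewrite [X in _ = _ + X](eq_bigl (fun c : 'I_n * 'I_n =>
     ((prevP S' c.1 == b) && (prevP S' c.2 == a)) && (c.1 < c.2)%N)); last first.
  case=> x y /=; rewrite leadstoE //=.
  case: (eqVneq (prevP S' x) a) => hx.
    by rewrite hx eq_sym (negbTE ab') !andbF.
  rewrite !andbT /=.
  case: (eqVneq (prevP S' x) b) => hx'; last by rewrite !andbF.
  case: (eqVneq (prevP S' y) a) => hy; last by rewrite !andbF.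
  have := chord_char ex hx' hy; rewrite eq_sym => /(_ ab' nab nba).
  rewrite /isChord /= => ->.
  by rewrite !andbT.
rewrite [X in _ = _ + X](reindex (fun p : 'I_n * 'I_n => (p.2, p.1))) /=; last first.
  by apply: onW_bij; exists (fun p : 'I_n * 'I_n => (p.2, p.1)); case.
rewrite [X in _ = _ + X](eq_bigr (fun j => omega [set: 'I_n] j z)); last first.
  by case=> x y _ /=; rewrite Fsym.
rewrite [X in _ = _ + X](eq_bigl (fun j : 'I_n * 'I_n =>
   ((prevP S' j.1 == a) && (prevP S' j.2 == b)) && ~~ (j.1 < j.2)%N)); last first.
  case=> x y /=; rewrite [(prevP S' y == b) && _]andbC.
  case: (eqVneq (prevP S' x) a) => hx //=.
  case: (eqVneq (prevP S' y) b) => hy //=.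
  case: (ltngtP x y) => // /val_inj e.
  by move: ab'; rewrite -hx -hy e eqxx.
rewrite [X in _ = X](_ : _ = \sum_(p | (prevP S' p.1 == a) && (prevP S' p.2 == b))
     omega [set: 'I_n] p z); last first.
  by rewrite [X in _ = X](bigID (fun j : 'I_n * 'I_n => (j.1 < j.2)%N)).
rewrite -(pair_big_dep (fun x => prevP S' x == a) (fun _ y => prevP S' y == b)
           (fun x y => omega [set: 'I_n] (x, y) z)).
have ib : forall x : 'I_n, \sum_(y | prevP S' y == b) omega [set: 'I_n] (x, y) z =
   (dlogdiff x (nextP S' b) z - dlogdiff x b z) -
   (dlogdiff (ordS x) (nextP S' b) z - dlogdiff (ordS x) b z).
  move=> x.
  rewrite (eq_bigr (fun y => (dlogdiff x (ordS y) z - dlogdiff x y z) -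
                 (dlogdiff (ordS x) (ordS y) z - dlogdiff (ordS x) y z))); last first.
    by move=> y _; rewrite omegaE /= !nextP_setT zmod4.
  by rewrite sumrB (telescope (fun y => dlogdiff x y z) bP aP ab')
    (telescope (fun y => dlogdiff (ordS x) y z) bP aP ab').
rewrite (eq_bigr _ (fun x _ => ib x)).
set h := fun x : 'I_n => dlogdiff x (nextP S' b) z - dlogdiff x b z.
rewrite (eq_bigr (fun x => (fun y => - h y) (ordS x) - (fun y => - h y) x)); last first.
  by move=> x _; rewrite /h opprK addrC.
have ba : b != a by rewrite eq_sym.
rewrite (telescope (fun y => - h y) aP bP ba) opprK /h.
by rewrite omegaE /= zmod4 addrC.
Qed.

Definition one_form n (a : ext n) :=
  forall J : {set 'I_n}, (forall i, J != [set i]) -> a J = 0.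

Lemma one_form_sum n (a : ext n) J : one_form a ->
  a J = \sum_(i : 'I_n) (J == [set i])%:R * a [set i].
Proof.
move=> ha; case: (pickP (fun i => J == [set i])) => [i /eqP ->|h].
- rewrite (bigD1 i) //= eqxx mul1r big1 ?addr0 // => j ji.
  suff -> : ([set i] == [set j]) = false by rewrite mul0r.
  by apply/negbTE; apply: contra ji => /eqP/set1_inj ->.
- rewrite ha; last by move=> i; rewrite h.
  by rewrite big1 // => i _; rewrite h mul0r.
Qed.

Lemma omega_one n (P : {set 'I_n}) c z : one_form (omega P c z).
Proof.
move=> J h; rewrite !ffunE !(negbTE (h _)).
by rewrite !subr0 addr0.
Qed.

Definition sg n (i : 'I_n) (I : {set 'I_n}) : CC := (-1) ^+ ninv [set i] (I :\ i).

Lemma wedge1E n (a m : ext n) I : one_form a ->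
  wedge a m I = \sum_(i | i \in I) sg i I * a [set i] * m (I :\ i).
Proof.
move=> ha; rewrite ffunE.
transitivity (\sum_(J : {set 'I_n} | J \subset I) \sum_(i : 'I_n)
   ((J == [set i])%:R * ((-1) ^+ ninv J (I :\: J) * a [set i] * m (I :\: J)))).
  apply: eq_bigr => J _; rewrite (one_form_sum J ha) mulr_sumr mulr_suml.
  by apply: eq_bigr => i _; ring.
rewrite exchange_big /= [RHS]big_mkcond /=; apply: eq_bigr => i _.
rewrite (eq_bigr (fun J => if J == [set i] then
   ((-1) ^+ ninv J (I :\: J) * a [set i] * m (I :\: J)) else 0)); last first.
  by move=> J _; case: eqP; rewrite ?mul1r ?mul0r.
rewrite -big_mkcondr /=.
case iI : (i \in I).
- rewrite (eq_bigl (fun J => J == [set i])); last first.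
    move=> J; case: (eqVneq J [set i]) => [->|]; last by rewrite andbF.
    by rewrite sub1set iI.
  by rewrite big_pred1_eq.
- rewrite big_pred0 // => J; case: (eqVneq J [set i]) => [->|]; last by rewrite andbF.
  by rewrite sub1set iI.
Qed.

Lemma ninv1 n (i : 'I_n) (K : {set 'I_n}) :
  ninv [set i] K = #|[set k in K | (k < i)%N]|.
Proof.
have inj : injective (pair i : 'I_n -> 'I_n * 'I_n) by move=> x y [].
rewrite /ninv -(card_imset _ inj); apply: eq_card => -[x y]; rewrite [LHS]inE /=.
rewrite in_set1; apply/idP/imsetP => [/andP[/andP[/eqP -> yK] yx]|[k]].
  by exists y => //; rewrite inE yK.
by rewrite inE => /andP[kK ki] [-> ->]; rewrite eqxx kK ki.
Qed.

Lemma cnt_del n (i j : 'I_n) (K : {set 'I_n}) :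
  #|[set k in K | (k < i)%N]| = (((j \in K) && (j < i)%N) + #|[set k in K :\ j | (k < i)%N]|)%N.
Proof.
rewrite (cardsD1 j [set k in K | (k < i)%N]) inE; congr (_ + _).
by apply: eq_card => k; rewrite !inE andbA.
Qed.

Lemma sgE n (i : 'I_n) (I : {set 'I_n}) : sg i I = (-1) ^+ #|[set k in I | (k < i)%N]|.
Proof. by rewrite /sg ninv1 (cnt_del i i I) ltnn andbF. Qed.

Lemma sg_swap n (i j : 'I_n) (I : {set 'I_n}) : i \in I -> j \in I -> i != j ->
  sg i I * sg j (I :\ i) = - (sg j I * sg i (I :\ j)).
Proof.
move=> iI jI ij; rewrite !sgE (cnt_del i j I) (cnt_del j i I) iI jI /=.
set x := #|[set k in I :\ j | (k < i)%N]|; set y := #|[set k in I :\ i | (k < j)%N]|.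
have e : ((j < i)%N + (i < j)%N = 1)%N.
  case: ltngtP => //= e; by move: ij; rewrite (val_inj e) eqxx.
have [ji|ij'] := boolP (j < i)%N.
- have -> : (i < j)%N = false by move: e; rewrite ji; case: (i < j)%N.
  rewrite !exprD /=; ring.
- have -> : (i < j)%N = true by move: e; rewrite (negbTE ij'); case: (i < j)%N.
  rewrite !exprD /=; ring.
Qed.

Lemma setD1C n (I : {set 'I_n}) i j : I :\ i :\ j = I :\ j :\ i.
Proof. by apply/setP => k; rewrite !inE andbCA. Qed.

Lemma dsum n (P : pred 'I_n) (Q : 'I_n -> pred 'I_n) (F : 'I_n -> 'I_n -> CC) :
  \sum_(i | P i) \sum_(j | Q i j) F i j =
  \sum_(i : 'I_n) \sum_(j : 'I_n) (if P i && Q i j then F i j else 0).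
Proof.
rewrite big_mkcond; apply: eq_bigr => i _; case: (P i) => /=.
  by rewrite big_mkcond.
by rewrite big1.
Qed.

Lemma wedge_anti n (a b m : ext n) : one_form a -> one_form b ->
  wedge a (wedge b m) = - wedge b (wedge a m).
Proof.
move=> ha hb; apply/ffunP => I; rewrite [RHS]ffunE !wedge1E //.
under eq_bigr do rewrite wedge1E // mulr_sumr.
under [X in _ = - X]eq_bigr do rewrite wedge1E // mulr_sumr.
rewrite dsum [X in _ = - X]dsum [X in _ = - X]exchange_big /= -sumrN.
apply: eq_bigr => i _; rewrite -sumrN; apply: eq_bigr => j _.
rewrite !inE.
case: (eqVneq j i) => [->|ji]; first by rewrite !andbF oppr0.
case: (eqVneq i j) => [e|ij]; first by move: ji; rewrite e eqxx.
case iI : (i \in I); case jI : (j \in I); rewrite /= ?oppr0 //.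
rewrite (setD1C I j i).
have := sg_swap iI jI ij.
move=> e.
transitivity ((sg i I * sg j (I :\ i)) * (a [set i] * b [set j] * m (I :\ i :\ j))).
  by ring.
by rewrite e; ring.
Qed.

Lemma wedgeDl n (a1 a2 m : ext n) : wedge (a1 + a2) m = wedge a1 m + wedge a2 m.
Proof.
apply/ffunP => I; rewrite !ffunE -big_split /=; apply: eq_bigr => J _.
by rewrite ffunE; ring.
Qed.

Lemma wedge0l n (m : ext n) : wedge 0 m = 0.
Proof. by apply/ffunP => I; rewrite !ffunE big1 // => J _; rewrite ffunE; ring. Qed.

Lemma wedgeDr n (a m1 m2 : ext n) : wedge a (m1 + m2) = wedge a m1 + wedge a m2.
Proof.
apply/ffunP => I; rewrite !ffunE -big_split /=; apply: eq_bigr => J _.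
by rewrite ffunE; ring.
Qed.

Lemma wedge0r n (a : ext n) : wedge a 0 = 0.
Proof. by apply/ffunP => I; rewrite !ffunE big1 // => J _; rewrite ffunE; ring. Qed.

Lemma wedge_suml n (T : Type) (r : seq T) (F : T -> ext n) (m : ext n) :
  wedge (\sum_(i <- r) F i) m = \sum_(i <- r) wedge (F i) m.
Proof.
exact: (big_morph (fun a => wedge a m) (fun a b => wedgeDl a b m) (wedge0l m)).
Qed.

Lemma wedge_sumr n (T : Type) (r : seq T) (F : T -> ext n) (a : ext n) :
  wedge a (\sum_(i <- r) F i) = \sum_(i <- r) wedge a (F i).
Proof.
exact: (big_morph (fun m => wedge a m) (fun b c => wedgeDr a b c) (wedge0r a)).
Qed.

Lemma aa0 n (a m : ext n) : one_form a -> wedge a (wedge a m) = 0.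
Proof.
move=> ha; have := wedge_anti m ha ha.
set w := wedge a (wedge a m) => e.
apply/ffunP => I; rewrite [X in _ = X]ffunE.
have : w I = - w I by rewrite {1}e ffunE.
move=> h; have : w I *+ 2 == 0 by rewrite mulr2n {1}h addNr.
by rewrite mulrn_eq0 /= => /eqP.
Qed.

Lemma mono_cons n (P : {set 'I_n}) c cs z :
  monomial P (c :: cs) z = wedge (omega P c z) (monomial P cs z).
Proof. by []. Qed.

Lemma mono_cat n (P : {set 'I_n}) l1 l2 z :
  monomial P (l1 ++ l2) z =
  foldr (fun c m => wedge (omega P c z) m) (monomial P l2 z) l1.
Proof. by elim: l1 => //= c l1 <-. Qed.

Lemma shift0 n (P : {set 'I_n}) c z l (m : ext n) :
  wedge (omega P c z) (foldr (fun e m => wedge (omega P e z) m)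
                        (wedge (omega P c z) m) l) = 0.
Proof.
elim: l => [|d l IH] /=; first exact: aa0 (omega_one _ _ _).
rewrite (wedge_anti _ (omega_one P c z) (omega_one P d z)).
transitivity (- wedge (omega P d z) 0); first by congr (- wedge _ _); exact: IH.
by rewrite wedge0r oppr0.
Qed.

Lemma dup0 n (P : {set 'I_n}) cs z : ~~ uniq cs -> monomial P cs z = 0.
Proof.
elim: cs => [|c cs IH] //=; rewrite negb_and negbK => /orP[h|h].
- case/splitPr: h => l1 l2.
  rewrite /form_wedge mono_cat mono_cons.
  exact: shift0.
- by rewrite /form_wedge IH // wedge0r.
Qed.

Definition liftc n (S' : {set 'I_n}) (c' : 'I_n * 'I_n) : seq ('I_n * 'I_n) :=
  [seq c <- index_enum ('I_n * 'I_n)%type | isChord setT c && leadsto S' c c'].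

Definition lifts n (S' : {set 'I_n}) (cs : seq ('I_n * 'I_n)) :=
  foldr (fun c' L => [seq d :: ds | d <- liftc S' c', ds <- L]) [:: [::]] cs.

Lemma expand n (S' : {set 'I_n}) cs z : all (isChord S') cs ->
  monomial S' cs z = \sum_(ds <- lifts S' cs) monomial setT ds z.
Proof.
elim: cs => [|c cs IH] /=; first by rewrite big_seq1.
case/andP=> hc hcs.
rewrite /form_wedge IH // part1 //.
rewrite (_ : \sum_(c0 | isChord [set: 'I_n] c0 && leadsto S' c0 c) omega [set: 'I_n] c0 z
   = \sum_(d <- liftc S' c) omega [set: 'I_n] d z); last by rewrite big_filter.
rewrite wedge_suml.
rewrite big_allpairs_dep /=; apply: eq_bigr => d _.
by rewrite wedge_sumr.
Qed.

Lemma In_mem (T : eqType) (x : T) (s : seq T) : List.In x s -> x \in s.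
Proof.
elim: s => //= y s IH [->|h]; first by rewrite mem_head.
by rewrite in_cons IH ?orbT.
Qed.

Lemma all2_mem (T1 T2 : eqType) (R : T1 -> T2 -> bool) s1 s2 y :
  all2 R s1 s2 -> y \in s2 -> exists2 x, x \in s1 & R x y.
Proof.
elim: s1 s2 => [|x s1 IH] [|y' s2] //= /andP[r h].
rewrite in_cons => /orP[/eqP ->|ys]; first by exists x; rewrite ?mem_head.
by case: (IH _ h ys) => x' xs r'; exists x'; rewrite // in_cons xs orbT.
Qed.

Lemma all2_memL (T1 T2 : eqType) (R : T1 -> T2 -> bool) s1 s2 x :
  all2 R s1 s2 -> x \in s1 -> exists2 y, y \in s2 & R x y.
Proof.
elim: s1 s2 => [|x' s1 IH] [|y s2] //= /andP[r h].
rewrite in_cons => /orP[/eqP ->|xs]; first by exists y; rewrite ?mem_head.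
by case: (IH _ h xs) => y' ys r'; exists y'; rewrite // in_cons ys orbT.
Qed.

Lemma all2_all (T1 T2 : Type) (R : T1 -> T2 -> bool) (p : pred T1) s1 s2 :
  all2 R s1 s2 -> (forall x y, R x y -> p x) -> all p s1.
Proof.
move=> h hp; elim: s1 s2 h => [|x s1 IH] [|y s2] //= /andP[r h].
by rewrite (hp _ _ r) (IH _ h).
Qed.

Lemma all2_uniq (T1 T2 : eqType) (R : T1 -> T2 -> bool) s1 s2 :
  all2 R s1 s2 -> (forall x y1 y2, R x y1 -> R x y2 -> y1 = y2) -> uniq s2 -> uniq s1.
Proof.
move=> h det; elim: s1 s2 h => [|x s1 IH] [|y s2] //= /andP[r h] /andP[ys u].
rewrite (IH _ h u) andbT; apply/negP => xs.
case: (all2_memL h xs) => y' ys' r'.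
by move: ys; rewrite (det _ _ _ r r') ys'.
Qed.

Lemma count_all2 (T1 T2 : Type) (R : T1 -> T2 -> bool) (p1 : pred T1) (p2 : pred T2) s1 s2 :
  all2 R s1 s2 -> (forall x y, R x y -> p1 x -> p2 y) -> (count p1 s1 <= count p2 s2)%N.
Proof.
move=> h hp; elim: s1 s2 h => [|x s1 IH] [|y s2] //= /andP[r h].
apply: leq_add; last exact: IH.
by case e : (p1 x) => //=; rewrite (hp _ _ r e).
Qed.

Definition Rl n (S' : {set 'I_n}) (d c : 'I_n * 'I_n) : bool :=
  [&& isChord setT d, leadsto S' d c & isChord S' c].

Lemma lifts_all2 n (S' : {set 'I_n}) cs ds : all (isChord S') cs ->
  ds \in lifts S' cs -> all2 (Rl S') ds cs.
Proof.
elim: cs ds => [|c cs IH] ds /=; first by rewrite inE => _ /eqP ->.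
case/andP=> hc hcs /allpairsPdep[d [ds' [hd hds' ->]]] /=.
rewrite (IH _ hcs hds') andbT /Rl hc andbT.
by move: hd; rewrite mem_filter => /andP[].
Qed.

Lemma chord_lt n (P : {set 'I_n}) c : isChord P c -> (c.1 < c.2)%N.
Proof. by case/and5P. Qed.

Lemma Rl_det n (S' : {set 'I_n}) d c1 c2 : Rl S' d c1 -> Rl S' d c2 -> c1 = c2.
Proof.
case/and3P=> _ /eqP l1 h1 /and3P[_ /eqP l2 h2].
have lt1 := chord_lt h1; have lt2 := chord_lt h2.
have ne : c2.1 != c2.2 by rewrite neq_ltn lt2.
have := set2_eq (etrans (esym l1) l2) ne.
case: c1 c2 lt1 lt2 {l1 l2 h1 h2 ne} => [a b] [x y] /= ab xy.
case=> -[e1 e2]; first by rewrite e1 e2.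
by subst; exfalso; move: (ltn_trans ab xy); rewrite ltnn.
Qed.

Lemma lift_resid n (S' : {set 'I_n}) (r : nat) cs ds : all (isChord S') cs ->
  (nresidual cs <= r)%N -> uniq cs -> ds \in lifts S' cs ->
  all (isChord setT) ds && (nresidual ds <= r)%N.
Proof.
move=> hcs hr ucs hds.
have A := lifts_all2 hcs hds.
rewrite (all2_all A) /=; last by move=> x y /and3P[].
have uds : uniq ds by apply: (all2_uniq A) => // x y1 y2; apply: Rl_det.
apply: leq_trans hr.
rewrite /nresidual !undup_id //.
apply: (count_all2 A) => d c /and3P[hd hl hc].
apply: contra => /hasP[c2 c2s cc2].
case: (all2_mem A c2s) => d2 d2s /and3P[hd2 hl2 hc2].
apply/hasP; exists d2 => //.
have ex : exists t, t \in S' by exists c.1; case/and5P: hc.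
apply: (cross_lift ex (chord_lt hd) (chord_lt hc) (chord_lt hc2) hl hl2 cc2).
Qed.

Lemma key n (S' : {set 'I_n}) (r : nat) (l : seq (rat * dform n)) :
  (forall p, List.In p l -> resmonom S' r p.2) ->
  exists l' : seq (rat * dform n),
    (forall p, List.In p l' -> resmonom setT r p.2) /\
    forall z I, \sum_(p <- l) ratr p.1 * p.2 z I = \sum_(p <- l') ratr p.1 * p.2 z I.
Proof.
elim: l => [|p l IH] hl; first by exists [::].
have [l1 [h1 e1]] : exists l' : seq (rat * dform n),
    (forall p, List.In p l' -> resmonom setT r p.2) /\
    forall z I, \sum_(p <- l) ratr p.1 * p.2 z I = \sum_(p <- l') ratr p.1 * p.2 z I.
  by apply: IH => q hq; apply: hl; right.
have [cs [hcs hr ep]] := hl p (or_introl erefl).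
case: (boolP (uniq cs)) => ucs.
- exists ([seq (p.1, monomial setT ds) | ds <- lifts S' cs] ++ l1); split.
  + move=> q hq; case: (List.in_app_or _ _ _ hq); last exact: h1.
    case/List.in_map_iff => ds [<- hds] /=.
    have /andP[a b] := lift_resid hcs hr ucs (In_mem hds).
    by exists ds.
  + move=> z I; rewrite big_cons big_cat big_map /= e1; congr (_ + _).
    rewrite ep (expand z hcs) sum_ffunE mulr_sumr.
    by apply: eq_bigr.
- exists l1; split => // z I.
  by rewrite big_cons ep (dup0 _ z ucs) ffunE mulr0 add0r e1.
Qed.

Theorem lemma4 (n : nat) (S' : {set 'I_n}) (hS' : (3 <= #|S'|)%N) :
  (forall c' : 'I_n * 'I_n, isChord S' c' ->
     forall z : 'I_n -> CC, injective z ->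
       omega S' c' z =
       \sum_(c : 'I_n * 'I_n | isChord setT c && leadsto S' c c') omega setT c z)
  /\
  (forall (r : nat) (x : dform n),
     in_Qspan (resmonom S' r) x -> in_Qspan (resmonom setT r) x).
Proof.
split.
- by move=> c' hc z _; apply: part1.
- move=> r x [l [hl hx]].
  have [l' [h' e']] := key hl.
  exists l'; split => // z zi; rewrite hx //.
  by apply/ffunP => I; rewrite !ffunE e'.
Qed.
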